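(* Let $A\colon X\to Y$ be a compact linear operator between separable Hilbert spaces with infinite-dimensional range, where $X=L^2(\mathcal{M})$, with singular value decomposition $Ax=\sum_{n=1}^\infty\sigma_n\langle x,v_n\rangle_X u_n$. Let $(c_n)_{n\in\mathbb{N}}$ be real numbers with $c_n\ge c_0>0$ for all $n$, and for $\alpha>0$ let $T^c_\alpha y=\sum_{n=1}^\infty\frac{\sigma_n}{\sigma_n^2+\alpha c_n}\langle y,u_n\rangle_Y v_n$. Then for every $y\in\mathcal{D}(A^\dagger)$, $$\|A^\dagger y-T^c_\alpha y\|_X\to 0\qquad\text{as }\alpha\to 0.$$
   Context: $\mathcal{M}$ is a measure space. The SVD consists of orthonormal systems $(u_n)$ in $Y$ and $(v_n)$ in $X$ and a non-increasing sequence $(\sigma_n)$ of positive reals with $\sigma_n\to0$. The pseudoinverse is $A^\dagger y=\sum_{n}\sigma_n^{-1}\langle y,u_n\rangle_Y v_n$ on the domain $\mathcal{D}(A^\dagger)=\{y\in Y:\sum_n\sigma_n^{-2}|\langle y,u_n\rangle_Y|^2<\infty\}$. *)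

(* Defs.v *)
From HB Require Import structures.
From mathcomp Require Import all_boot all_order all_algebra.
From mathcomp Require Import all_classical all_reals all_analysis.
Set Implicit Arguments. Unset Strict Implicit. Unset Printing Implicit Defensive.
Import Order.TTheory GRing.Theory Num.Theory.
Import numFieldNormedType.Exports.
Local Open Scope classical_set_scope.
Local Open Scope ring_scope.

(* [ip] is an inner product on V inducing the norm of V: symmetric, linear in
   the first argument, and ||x|| = sqrt <x,x> (positive definiteness follows). *)
Definition is_inner_product (R : realType) (V : normedModType R)
    (ip : V -> V -> R) : Prop :=
  [/\ forall x y, ip x y = ip y x,
      forall (a : R) (x y z : V), ip (a *: x + y) z = a * ip x z + ip y z
    & forall x, `|x| = Num.sqrt (ip x x)].

Definition separable_hilbert (R : realType) (V : completeNormedModType R)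
    (ip : V -> V -> R) : Prop :=
  is_inner_product ip /\
  exists D : set V, countable D /\ closure D = setT.

Definition orthonormal_sys (R : realType) (V : normedModType R)
    (ip : V -> V -> R) (e : nat -> V) : Prop :=
  forall i j, ip (e i) (e j) = (i == j)%:R.

Definition hsum (R : realType) (V : normedModType R) (f : nat -> V) : V :=
  limn (series f).

Definition compact_op (R : realType) (X Y : normedModType R) (A : X -> Y) : Prop :=
  compact (closure (A @` [set x : X | `|x| <= 1])).

Definition dom_pinv (R : realType) (Y : normedModType R) (ipY : Y -> Y -> R)
    (sigma : nat -> R) (u : nat -> Y) (y : Y) : Prop :=
  cvgn (series (fun n => (sigma n)^-2 * (ipY y (u n)) ^+ 2)).

Definition pinv_svd (R : realType) (X Y : normedModType R) (ipY : Y -> Y -> R)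
    (sigma : nat -> R) (u : nat -> Y) (v : nat -> X) (y : Y) : X :=
  hsum (fun n => ((sigma n)^-1 * ipY y (u n)) *: v n).

Definition Tc_reg (R : realType) (X Y : normedModType R) (ipY : Y -> Y -> R)
    (sigma c : nat -> R) (u : nat -> Y) (v : nat -> X) (alpha : R) (y : Y) : X :=
  hsum (fun n => (sigma n / ((sigma n) ^+ 2 + alpha * c n) * ipY y (u n)) *: v n).

(* Main.v *)
Require Import Defs.
From HB Require Import structures.
From mathcomp Require Import all_boot all_order all_algebra.
From mathcomp Require Import all_classical all_reals all_analysis.
Import Order.TTheory GRing.Theory Num.Theory.
Import numFieldNormedType.Exports.
Local Open Scope classical_set_scope.
Local Open Scope ring_scope.

Section Hilb.
Variables (R : realType) (X : completeNormedModType R) (ip : X -> X -> R).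
Hypothesis hip : is_inner_product ip.
Variable v : nat -> X.
Hypothesis hv : orthonormal_sys ip v.

Lemma ip0l z : ip 0 z = 0.
Proof.
case: hip => _ hlin _; have := hlin (-1) 0 0 z.
by rewrite scaler0 addr0 mulN1r addNr.
Qed.

Lemma ipZl a x z : ip (a *: x) z = a * ip x z.
Proof. by case: hip => _ hlin _; rewrite -[a *: x]addr0 hlin ip0l addr0. Qed.

Lemma ipDl x y z : ip (x + y) z = ip x z + ip y z.
Proof. by case: hip => _ hlin _; rewrite -[x]scale1r hlin mul1r scale1r. Qed.

Lemma ipZr a x z : ip x (a *: z) = a * ip x z.
Proof. by case: hip => hs _ _; rewrite hs ipZl hs. Qed.

Lemma ip_suml (r : seq nat) (F : nat -> X) z :
  ip (\sum_(i <- r) F i) z = \sum_(i <- r) ip (F i) z.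
Proof. exact: (big_morph (fun x => ip x z) (fun x y => ipDl x y z) (ip0l z)). Qed.

Lemma ip_sumr (r : seq nat) (F : nat -> X) z :
  ip z (\sum_(i <- r) F i) = \sum_(i <- r) ip z (F i).
Proof.
case: hip => hs _ _; rewrite hs ip_suml; apply: eq_bigr => i _; exact: hs.
Qed.

Lemma norm_sumv N M (d : nat -> R) :
  `|\sum_(N <= k < M) d k *: v k| = Num.sqrt (\sum_(N <= k < M) d k ^+ 2).
Proof.
case: hip => _ _ hn; rewrite hn; congr Num.sqrt.
rewrite ip_suml; apply: eq_big_seq => i Hi.
rewrite ip_sumr (bigD1_seq i) //= ?iota_uniq // big1 ?addr0.
  by rewrite ipZl ipZr hv eqxx mulr1 expr2.
move=> j Hj; rewrite ipZl ipZr hv eq_sym (negbTE Hj) !mulr0 //.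
Qed.

Lemma cvg_sumv (a d : nat -> R) :
  cvgn (series (fun n => a n ^+ 2)) -> (forall n, `|d n| <= `|a n|) ->
  cvgn (series (fun n => d n *: v n)).
Proof.
move=> /cauchy_cvgP/cauchy_seriesP ha hda.
apply/cauchy_cvgP/cauchy_seriesP => e e0.
have e20 : 0 < e ^+ 2 by rewrite exprn_gt0.
apply: filterS (ha _ e20) => n /=.
rewrite norm_sumv ger0_norm ?sumr_ge0 // => [H|i _]; last exact: sqr_ge0.
rewrite -(ger0_norm (ltW e0)) -sqrtr_sqr ltr_sqrt //.
apply: le_lt_trans H; apply: ler_sum => i _.
by rewrite -(real_normK (num_real (d i))) -(real_normK (num_real (a i))) ler_sqr ?nnegrE.

Qed.
End Hilb.
From mathcomp Require Import ring lra.

Theorem theorem4p2 (R : realType) (X Y : completeNormedModType R)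
    (ipX : X -> X -> R) (ipY : Y -> Y -> R)
    (hX : separable_hilbert ipX) (hY : separable_hilbert ipY)
    (A : {linear X -> Y}) (hAc : compact_op A)
    (sigma : nat -> R) (u : nat -> Y) (v : nat -> X)
    (hu : orthonormal_sys ipY u) (hv : orthonormal_sys ipX v)
    (hsig_pos : forall n, 0 < sigma n)
    (hsig_noninc : forall n, sigma n.+1 <= sigma n)
    (hsig_lim : sigma @ \oo --> 0)
    (hA : forall x, A x = hsum (fun n => (sigma n * ipX x (v n)) *: u n))
    (c : nat -> R) (c0 : R) (hc0 : 0 < c0) (hc : forall n, c0 <= c n)
    (y : Y) (hy : dom_pinv ipY sigma u y) :
  `|pinv_svd ipY sigma u v y - Tc_reg ipY sigma c u v alpha y| @[alpha --> 0^'+] --> 0.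
Proof.
case: hX => [hipX _].
pose a := fun n => (sigma n)^-1 * ipY y (u n).
have ha2 : cvgn (series (fun n => a n ^+ 2)).
  suff -> : (fun n => a n ^+ 2) = (fun n => (sigma n)^-2 * ipY y (u n) ^+ 2) by [].
  by apply/funext => n; rewrite /a exprMn exprVn.
pose sa := series (fun n => a n ^+ 2).
pose s := limn sa.
have sa_nd : nondecreasing_seq sa.
  by apply: (@nondecreasing_series _ _ xpredT 0) => n _ _; exact: sqr_ge0.
have sa_le M : sa M <= s by apply: nondecreasing_cvgn_le.
pose b := fun alpha n => sigma n / (sigma n ^+ 2 + alpha * c n) * ipY y (u n).
have key alpha n : 0 < alpha -> [/\ `|b alpha n| <= `|a n|, `|a n - b alpha n| <= `|a n|
    & (a n - b alpha n) ^+ 2 <= alpha * (c n / sigma n ^+ 2 * a n ^+ 2)].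
  move=> al0.
  have sn0 := hsig_pos n.
  have cn0 : 0 < c n by apply: lt_le_trans (hc n).
  have s20 : 0 < sigma n ^+ 2 by rewrite exprn_gt0.
  have ac0 : 0 < alpha * c n by rewrite mulr_gt0.
  have D0 : 0 < sigma n ^+ 2 + alpha * c n by rewrite addr_gt0.
  pose w := alpha * c n / (sigma n ^+ 2 + alpha * c n).
  have w0 : 0 <= w by rewrite /w divr_ge0 // ltW.
  have w1 : w <= 1 by rewrite /w ler_pdivrMr // mul1r lerDr ltW.
  have ew : a n - b alpha n = a n * w.
    rewrite /a /b /w; field.
    by rewrite (gt_eqF D0) (gt_eqF sn0).
  have eb : b alpha n = a n * (1 - w).
    rewrite /a /b /w; field.
    by rewrite (gt_eqF D0) (gt_eqF sn0).
  split.
  - rewrite eb normrM (@ger0_norm _ (1 - w)) ?subr_ge0 //.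
    by rewrite ler_piMr // gerBl.
  - by rewrite ew normrM (@ger0_norm _ w) // ler_piMr.
  - rewrite ew exprMn.
    have ww : w ^+ 2 <= alpha * c n / sigma n ^+ 2.
      apply: (@le_trans _ _ w).
        by rewrite expr2 ler_piMr.
      rewrite /w; apply: ler_wpM2l; first exact: ltW.
      by rewrite lef_pV2 ?posrE // lerDl ltW.
    apply: (@le_trans _ _ (a n ^+ 2 * (alpha * c n / sigma n ^+ 2))).
      by rewrite ler_wpM2l // sqr_ge0.
    by rewrite le_eqVlt; apply/orP; left; apply/eqP; ring.
have cvga := @cvg_sumv R X ipX hipX v hv a _ ha2 (fun n => lexx `|a n|).
have Hd alpha : 0 < alpha -> series (fun n => (a n - b alpha n) *: v n) @ \oo -->
    pinv_svd ipY sigma u v y - Tc_reg ipY sigma c u v alpha y.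
  move=> al0.
  have cb := @cvg_sumv R X ipX hipX v hv a _ ha2 (fun n => let: And3 h _ _ := key alpha n al0 in h).
  have E : series (fun n => (a n - b alpha n) *: v n) =
    series (fun n => a n *: v n) - series (fun n => b alpha n *: v n).
    apply/funext => M; rewrite !fctE /series /= -sumrB; apply: eq_bigr => k _.
    by rewrite scalerBl.
  rewrite E; exact: (cvgB cvga cb).
apply/cvgrPdist_lt => e e0.
have e20 : 0 < e ^+ 2 / 2 by rewrite divr_gt0 // exprn_gt0.
have /cvgrPdist_lt/(_ _ e20) := ha2.
case => N _ HN.
have {HN} HN := HN N (leqnn N).
pose K := \sum_(0 <= k < N) c k / sigma k ^+ 2 * a k ^+ 2.
have K0 : 0 <= K.
  apply: sumr_ge0 => k _; rewrite mulr_ge0 ?sqr_ge0 // divr_ge0 ?sqr_ge0 //.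
  by apply: ltW; apply: lt_le_trans (hc k).
pose delta := e ^+ 2 / 2 / (K + 1).
have K10 : 0 < K + 1 by rewrite ltr_wpDl.
have d0 : 0 < delta by rewrite divr_gt0.
near=> alpha.
have al0 : 0 < alpha by near: alpha; exact: nbhs_right_gt.
have ald : alpha < delta by near: alpha; exact: nbhs_right_lt.
rewrite sub0r normrN normr_id.
pose B := alpha * K + (s - sa N).
have BK : alpha * K < e ^+ 2 / 2.
  apply: (@le_lt_trans _ _ (alpha * (K + 1))).
    by apply: ler_wpM2l; [exact: ltW | rewrite lerDl].
  by rewrite -ltr_pdivlMr.
have Bs : s - sa N < e ^+ 2 / 2 by apply: le_lt_trans (ler_norm _) HN.
have Be : B < e ^+ 2.
  by rewrite /B (splitr (e ^+ 2)) ltrD.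
have B0 : 0 <= B by apply: addr_ge0; [apply: mulr_ge0 => //; exact: ltW | rewrite subr_ge0].
apply: (@le_lt_trans _ _ (Num.sqrt B)); last first.
  by rewrite -(ger0_norm (ltW e0)) -sqrtr_sqr ltr_sqrt // exprn_gt0.
apply: (ler_cvg_to (cvg_norm (Hd alpha al0)) (cvg_cst (Num.sqrt B))).
apply: nearW => M /=.
rewrite /series /= (@norm_sumv R X ipX hipX v hv) ler_sqrt //.
apply: (@le_trans _ _ (\sum_(0 <= k < maxn M N) (a k - b alpha k) ^+ 2)).
  have : nondecreasing_seq (fun n => \sum_(0 <= k < n | xpredT k) (a k - b alpha k) ^+ 2).
    by apply: (@nondecreasing_series _ _ xpredT 0) => n _ _; exact: sqr_ge0.
  by move/(_ M (maxn M N) (leq_maxl M N)).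
rewrite (@big_cat_nat _ _ _ N) //= ?leq_maxr //.
apply: lerD.
  rewrite /K mulr_sumr; apply: ler_sum => k _.
  by case: (key alpha k al0).
apply: (@le_trans _ _ (\sum_(N <= k < maxn M N) a k ^+ 2)).
  apply: ler_sum => k _.
  case: (key alpha k al0) => _ h _.
  by rewrite -(real_normK (num_real (a k - _))) -(real_normK (num_real (a k))) ler_sqr ?nnegrE.
rewrite -(sub_series_geq _ (leq_maxr M N)).
by rewrite lerB.
Unshelve. all: by end_near.
Qed.
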